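(* Let $n \ge 1$, let $\beta_w, \beta_n \in (0,1)$ with $\beta_n < \beta_w$, and let $w_1, \dots, w_n \in \mathbb{R}_{\ge 0}$ with $W := \sum_{i=1}^n w_i \neq 0$. Then there exist integers $t_1, \dots, t_n \in \mathbb{Z}_{\ge 0}$, with $T := \sum_{i=1}^n t_i$, such that for every $S \subseteq [n]$ with $w(S) > \beta_w W$ we have $t(S) > \beta_n T$, and $$T \le \left\lceil \frac{\beta_w(1-\beta_w)}{\beta_w - \beta_n}\, n \right\rceil.$$
   Context: $[n] := \{1,\dots,n\}$. For $S \subseteq [n]$, $w(S) := \sum_{i\in S} w_i$ and $t(S) := \sum_{i \in S} t_i$. (This is the upper bound for the Weight Qualification problem, which asks to minimize $T$ subject to the displayed constraint.) *)

(* Defs.v *)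
From mathcomp Require Import all_boot all_order all_algebra.
From mathcomp Require Import reals.
Set Implicit Arguments. Unset Strict Implicit. Unset Printing Implicit Defensive.
Import Order.TTheory GRing.Theory Num.Theory.
Local Open Scope ring_scope.

Definition wsum (R : realType) (n : nat) (w : 'I_n -> R) (S : {set 'I_n}) : R :=
  \sum_(i in S) w i.

Definition tsum (n : nat) (t : 'I_n -> nat) (S : {set 'I_n}) : nat :=
  (\sum_(i in S) t i)%N.

(* Main.v *)
Require Import Defs.
From mathcomp Require Import all_boot all_order all_algebra.
From mathcomp Require Import reals.
From mathcomp Require Import ring lra.
Import Order.TTheory GRing.Theory Num.Theory.
Local Open Scope ring_scope.

Lemma exmin (R : realType) (I : finType) (P : pred I) (F : I -> R) i0 :
  P i0 -> exists2 i, P i & forall j, P j -> F i <= F j.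
Proof.
move=> Pi0; case: (@Order.TotalTheory.arg_minP _ _ _ i0 P F Pi0) => i Pi Hi.
by exists i.
Qed.

Lemma alloc (R : realType) (n : nat) (bw : R) (w : 'I_n -> R) (i0 : 'I_n) :
  0 < w i0 -> (forall i, 0 <= w i) -> 0 < bw < 1 ->
  forall N : nat, exists (s : R) (t : 'I_n -> nat),
    [/\ 0 <= s, (0 < N)%N -> 0 < s, (\sum_i t i)%N = N &
     forall i, s * w i - bw <= (t i)%:R /\ (t i)%:R <= s * w i + 1 - bw].
Proof.
move=> wi0 hw /andP[bw0 bw1]; elim=> [|N [s [t [s0 sN tN ht]]]].
  exists 0, (fun _ => 0%N); split => //; first by rewrite big1.
  by move=> i; rewrite mul0r; split; lra.
have [i Pi Hi] := @exmin R _ (fun i => 0 < w i) (fun i => ((t i)%:R + bw) / w i) i0 wi0.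
set s' := ((t i)%:R + bw) / w i.
have s's : s <= s'.
  have := ht i => -[h1 _]; rewrite /s' ler_pdivlMr //; lra.
have s'0 : 0 < s' by rewrite /s' divr_gt0 //; have := ler0n R (t i); lra.
exists s', (fun j => if j == i then (t j).+1 else t j); split => //.
- by apply: ltW.
- rewrite -tN (bigD1 i) //= eqxx addSn [in RHS](bigD1 i) //=.
  by congr (_.+1); congr (_ + _); apply: eq_bigr => j /negPf ->.
move=> j; case: eqP => [->|/eqP ji].
  have e : s' * w i = (t i)%:R + bw by rewrite /s' divfK // gt_eqF.
  by rewrite -natr1 e; split; lra.
have [h1 h2] := ht j.
have [wj0|] := ltP 0 (w j).
  have := Hi j wj0; rewrite -/s' ler_pdivlMr // => h3.
  have : s * w j <= s' * w j by apply: ler_wpM2r; [apply: ltW|].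
  split; lra.
move=> wj; have wj0 : w j = 0 by apply: le_anti; rewrite wj hw.
by move: h1 h2; rewrite wj0 !mulr0.
Qed.

Theorem corollary1 (R : realType) (n : nat) (bw bn : R) (w : 'I_n -> R) :
  (1 <= n)%N ->
  0 < bw < 1 -> 0 < bn < 1 -> bn < bw ->
  (forall i, 0 <= w i) ->
  wsum w [set: 'I_n] != 0 ->
  exists t : 'I_n -> nat,
    (forall S : {set 'I_n},
        wsum w S > bw * wsum w [set: 'I_n] ->
        (tsum t S)%:R > bn * (tsum t [set: 'I_n])%:R) /\
    ((tsum t [set: 'I_n])%:Z <= Num.ceil (bw * (1 - bw) / (bw - bn) * n%:R)).
Proof.
move=> n1 hbw hbn bnw hw hW.
have [i0 wi0] : exists i0, 0 < w i0.
  apply/existsP; apply: contraNT hW => /existsPn H.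
  rewrite /wsum big1 // => i _; apply: le_anti; rewrite hw andbT.
  by have := H i; rewrite ltNge negbK.
set c := bw * (1 - bw) / (bw - bn) * n%:R.
have c0 : 0 < c.
  move: hbw hbn => /andP[? ?] /andP[? ?].
  rewrite /c mulr_gt0 ?ltr0n // divr_gt0 ?subr_gt0 // mulr_gt0 // subr_gt0 //.
have ceil0 : 0 <= Num.ceil c by rewrite ceil_ge0; lra.
set N := `|Num.ceil c|%N.
have NE : N%:Z = Num.ceil c by rewrite /N gez0_abs.
have [s [t [s0 sN tN ht]]] := @alloc R n bw w i0 wi0 hw hbw N.
exists t; split; last by rewrite /tsum (eq_bigl predT) ?tN ?NE // => i; rewrite inE.
move=> S hS.
have Npos : (0 < N)%N by rewrite -ltz_nat NE ceil_gt0.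
have spos := sN Npos.
have TN : (tsum t [set: 'I_n])%:R = N%:R :> R
  by rewrite /tsum (eq_bigl predT) ?tN // => i; rewrite inE.
have cN : c <= N%:R.
  by have := ceil_ge c; rewrite -NE.
set ind := fun i : 'I_n => ((i \in S)%:R : R).
have eS : (tsum t S)%:R = \sum_i ind i * (t i)%:R.
  rewrite /tsum natr_sum big_mkcond /=; apply: eq_bigr => i _.
  by rewrite /ind; case: (i \in S); rewrite ?mul1r ?mul0r.
have eT : (N%:R : R) = \sum_i (t i)%:R by rewrite -tN natr_sum.
have eWS : wsum w S = \sum_i ind i * w i.
  rewrite /wsum big_mkcond /=; apply: eq_bigr => i _.
  by rewrite /ind; case: (i \in S); rewrite ?mul1r ?mul0r.
have eW : wsum w [set: 'I_n] = \sum_i w i by rewrite /wsum (eq_bigl predT) // => i; rewrite inE.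
have key : \sum_i ((ind i - bw) * (s * w i) - bw * (1 - bw))
           <= \sum_i (ind i - bw) * (t i)%:R.
  apply: ler_sum => i _; have [h1 h2] := ht i.
  rewrite /ind; case: (i \in S) => /=; move: hbw => /andP[? ?].
    have : (1 - bw) * (s * w i - bw) <= (1 - bw) * (t i)%:R by apply: ler_wpM2l; lra.
    lra.
  have : bw * (t i)%:R <= bw * (s * w i + 1 - bw) by apply: ler_wpM2l; lra.
  lra.
rewrite sumrB sumr_const card_ord in key.
have e1 : \sum_i (ind i - bw) * (t i)%:R = (tsum t S)%:R - bw * N%:R.
  rewrite eS eT mulr_sumr -sumrB; apply: eq_bigr => i _; ring.
have e2 : \sum_i ((ind i - bw) * (s * w i)) = s * (wsum w S - bw * wsum w [set: 'I_n]).
  rewrite eWS eW mulr_sumr -sumrB mulr_sumr; apply: eq_bigr => i _; ring.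
rewrite e1 e2 in key.
have p : 0 < s * (wsum w S - bw * wsum w [set: 'I_n]) by rewrite mulr_gt0 // subr_gt0.
have hc : bw * (1 - bw) * n%:R <= (bw - bn) * N%:R.
  rewrite -ler_pdivrMl ?subr_gt0 //; apply: le_trans cN; rewrite /c.
  by rewrite mulrA [_ / _]mulrC mulrA.
rewrite TN; rewrite mulrnAr in key.
move: key hc p; rewrite -mulr_natr; lra.
Qed.
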